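(* Let $u$ and $v$ be Laurent polynomials with symmetry such that $vv^\star$ divides $uu^\star$. Then there exists a Laurent polynomial $d$ with symmetry such that $$d\,d^\star=\frac{uu^\star}{vv^\star}.$$ Furthermore, for every Laurent polynomial $d$ with symmetry satisfying this identity, there exists $k\in\mathbb Z$ such that $\mathrm{S}d(z)=z^{2k}\,\mathrm{S}u(z)/\mathrm{S}v(z)$.
   Context: Laurent polynomial $u(z)=\sum_ku(k)z^k$ with finitely many nonzero complex coefficients; $u^\star(z):=\sum_k\overline{u(k)}z^{-k}$. $u$ has symmetry of type $\epsilon z^c$ ($\epsilon\in\{\pm1\},c\in\mathbb Z$) if $u(z)=\epsilon z^cu(z^{-1})$; for nonzero $u$, $\mathrm{S}u(z):=u(z)/u(z^{-1})$; the zero polynomial has symmetry of every type. *)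

(* Defs.v *)
From HB Require Import structures.
From mathcomp Require Import all_boot all_order all_algebra.
From mathcomp Require Import finmap.
Set Implicit Arguments. Unset Strict Implicit. Unset Printing Implicit Defensive.
Import Order.TTheory GRing.Theory Num.Theory.
Local Open Scope ring_scope.
Local Open Scope fset_scope.

(* The complex numbers are modelled by an arbitrary numClosedFieldType C
   (algebraically closed field with complex conjugation x^* ), which
   includes the complex numbers.                                         *)

(* A Laurent polynomial u(z) = sum_k u(k) z^k : a finitely supported
   coefficient function int -> C (default value 0).                      *)
Definition lpoly (C : numClosedFieldType) := fsfun (fun _ : int => 0 : C).

Section Laurent.
Variable C : numClosedFieldType.
Implicit Types u v : lpoly C.

Definition lpmul u v : lpoly C :=
  [fsfun k in [fset (i + j)%R | i in finsupp u, j in finsupp v] =>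
     \sum_(i <- finsupp u) u i * v (k - i)%R].

(* u^star (z) = sum_k conj(u(k)) z^{-k} *)
Definition lpstar u : lpoly C :=
  [fsfun k in [fset (- i)%R | i in finsupp u] => (u (- k)%R)^*].

(* u(z^{-1}) = sum_k u(k) z^{-k} *)
Definition lprev u : lpoly C :=
  [fsfun k in [fset (- i)%R | i in finsupp u] => u (- k)%R].

Definition lp0 : lpoly C := [fsfun].

Definition lpmono (c : C) (n : int) : lpoly C :=
  [fsfun k in [fset n] => c].

Definition lp_sym_type u (eps : C) (c : int) : Prop :=
  u = lpmul (lpmono eps c) (lprev u).

Definition lp_has_sym u : Prop :=
  exists (eps : C) (c : int), (eps = 1 \/ eps = -1) /\ lp_sym_type u eps c.

End Laurent.

(* Main.v *)
Require Import Defs.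
From HB Require Import structures.
From mathcomp Require Import all_boot all_order all_algebra.
From mathcomp Require Import finmap.
From mathcomp Require Import zify ring.
Import Order.TTheory GRing.Theory Num.Theory.
Local Open Scope ring_scope.
Set Implicit Arguments. Unset Strict Implicit. Unset Printing Implicit Defensive.

Section S.
Variable C : numClosedFieldType.
Implicit Types u v : lpoly C.

Definition E u (z : C) : C := \sum_(k <- finsupp u) u k * z ^ k.

Lemma lp_dflt u k : k \notin finsupp u -> u k = 0.
Proof. by move/fsfun_dflt. Qed.

Lemma E_sub u z (s : seq int) : uniq s -> {subset finsupp u <= s} ->
  E u z = \sum_(k <- s) u k * z ^ k.
Proof.
move=> us sub; rewrite /E [RHS](bigID (mem (finsupp u))) /=.
rewrite [X in _ + X]big1 ?addr0; last by move=> k /lp_dflt ->; rewrite mul0r.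
rewrite -[RHS]big_filter; apply: perm_big; apply: uniq_perm.
- exact: fset_uniq.
- exact: filter_uniq.
by move=> k; rewrite mem_filter; case kin: (k \in finsupp u) => //=; rewrite sub.
Qed.

Lemma finsupp_in (S : {fset int}) (h : int -> C) k :
  k \in finsupp ([fsfun x in S => h x] : lpoly C) -> k \in S.
Proof. by rewrite mem_finsupp fsfunE; case: ifP => // _; rewrite eqxx. Qed.

Lemma E_mono c n z : E (lpmono c n) z = c * z ^ n.
Proof.
rewrite (@E_sub _ _ [:: n]) // ?big_seq1 /lpmono ?fsfunE ?inE ?eqxx //.
by move=> k /finsupp_in; rewrite inE mem_seq1.
Qed.

Lemma E_rev u z : E (lprev u) z = E u z^-1.
Proof.
rewrite (@E_sub _ _ [seq - i | i <- finsupp u]).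
- rewrite big_map /E; apply: eq_big_seq => i iin.
  by rewrite /lprev fsfunE in_imfset //= opprK exprz_inv.
- by rewrite map_inj_uniq ?fset_uniq //; exact: oppr_inj.
move=> k; rewrite mem_finsupp /lprev /lpstar fsfunE; case: ifP; last by rewrite eqxx.
by move=> /imfsetP [i /= iin ->]; rewrite map_f.
Qed.

Lemma E_star u z : E (lpstar u) z = (E u (z^*)^-1)^*.
Proof.
rewrite (@E_sub _ _ [seq - i | i <- finsupp u]).
- rewrite big_map /E rmorph_sum; apply: eq_big_seq => i iin.
  rewrite /lpstar fsfunE in_imfset //= opprK rmorphM /=.
  by rewrite fmorphXz fmorphV /= conjCK exprz_inv.
- by rewrite map_inj_uniq ?fset_uniq //; exact: oppr_inj.
move=> k; rewrite mem_finsupp /lprev /lpstar fsfunE; case: ifP; last by rewrite eqxx.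
by move=> /imfsetP [i /= iin ->]; rewrite map_f.
Qed.

Lemma E_mul u v z : z != 0 -> E (lpmul u v) z = E u z * E v z.
Proof.
move=> z0.
set S := [fset (i + j)%R | i in finsupp u, j in finsupp v]%fset.
have inS i j : i \in finsupp u -> j \in finsupp v -> i + j \in S.
  by move=> iu jv; apply/imfset2P; exists i => //; exists j.
rewrite (@E_sub _ _ S); first last.
- move=> k; rewrite mem_finsupp /lpmul fsfunE; case: ifP => //.
  by rewrite eqxx.
- exact: fset_uniq.
rewrite (eq_big_seq (fun k => \sum_(i <- finsupp u) u i * z ^ i * (v (k - i) * z ^ (k - i)))); last first.
  move=> k kS; rewrite /lpmul fsfunE kS mulr_suml; apply: eq_bigr => i _.
  by rewrite mulrACA -expfzDr // [i + _]addrC subrK.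
rewrite (exchange_big_dep xpredT) //= /E mulr_suml; apply: eq_big_seq => i iu.
rewrite -mulr_sumr; congr (_ * _).
rewrite -(big_map (fun k => k - i) predT (fun j => v j * z ^ j)).
rewrite -(@E_sub v z).
- by [].
- by rewrite map_inj_uniq ?fset_uniq //; exact: addIr.
move=> j jv; apply/mapP; exists (i + j); first exact: inS.
by rewrite [i + j]addrC addrK.
Qed.

Definition Bd u : nat := (\max_(k <- finsupp u) (`|k|.+1))%N.

Lemma Bd_lt u k : k \in finsupp u -> (`|k| < Bd u)%N.
Proof. by move=> kin; rewrite /Bd (leq_bigmax_seq k). Qed.

Definition Pol N u : {poly C} := \poly_(i < N + N) u (i%:Z - N%:Z).

Lemma Pol_horner N u z : (Bd u <= N)%N -> z != 0 ->
  (Pol N u).[z] = z ^ (N%:Z) * E u z.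
Proof.
move=> BN z0; rewrite horner_poly.
rewrite (@E_sub _ _ [seq i%:Z - N%:Z | i <- iota 0 (N + N)]).
- rewrite big_map mulr_sumr -(big_mkord xpredT (fun i => u (i%:Z - N%:Z) * z ^+ i)).
  rewrite /index_iota subn0; apply: eq_bigr => i _.
  by rewrite mulrCA -expfzDr // (_ : N%:Z + (i%:Z - N%:Z) = i%:Z) //; lia.
- by rewrite map_inj_uniq ?iota_uniq // => i j /addIr; case.
move=> k kin; have := Bd_lt kin => kB; apply/mapP.
exists `|(k + N%:Z)%R|%N; last by lia.
by rewrite mem_iota; lia.
Qed.

Lemma poly_all_root (p : {poly C}) : (forall z, p.[z] = 0) -> p = 0.
Proof.
move=> h; apply/eqP; apply: contraT => p0.
have := @max_poly_roots C p [seq i%:R | i <- iota 0 (size p)] p0.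
rewrite size_map size_iota ltnn; apply.
- by apply/allP => x _; apply/eqP; apply: h.
rewrite map_inj_uniq ?iota_uniq // => i j /eqP; rewrite eqr_nat => /eqP //.
Qed.

Lemma prodX_neq0 (bad : seq C) : ('X * \prod_(b <- bad) ('X - b%:P)) != 0 :> {poly C}.
Proof. by rewrite monic_neq0 // monicMl ?monicX ?monic_prod_XsubC. Qed.

Lemma prodX_horner (bad : seq C) z : z != 0 -> z \notin bad ->
   ('X * \prod_(b <- bad) ('X - b%:P)).[z] != 0.
Proof.
move=> z0 zb; rewrite hornerM hornerX horner_prod mulf_neq0 //.
rewrite prodf_seq_neq0; apply/allP => b bin /=; rewrite hornerXsubC subr_eq0.
by apply: contraNneq zb => ->.
Qed.

Lemma poly_ae (p : {poly C}) (bad : seq C) :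
  (forall z, z != 0 -> z \notin bad -> p.[z] = 0) -> p = 0.
Proof.
move=> h.
have : p * ('X * \prod_(b <- bad) ('X - b%:P)) = 0.
  apply: poly_all_root => z; rewrite hornerM.
  have [z0|z0] := eqVneq z 0.
    by rewrite z0 hornerM hornerX mul0r mulr0.
  have [zb|zb] := boolP (z \in bad).
    rewrite hornerM horner_prod (big_rem z) //= hornerXsubC subrr mul0r.
    by rewrite !mulr0.
  by rewrite h // mul0r.
by move/eqP; rewrite mulf_eq0 (negbTE (prodX_neq0 _)) orbF => /eqP.
Qed.

Lemma fresh (s : seq C) : exists z, z != 0 /\ z \notin s.
Proof.
set rs := [seq i.+1%:R | i <- iota 0 (size s).+1] : seq C.
have : has (fun x => x \notin s) rs.
  apply/hasPn => /= H; have : (size rs <= size s)%N.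
    apply: uniq_leq_size.
      by rewrite map_inj_uniq ?iota_uniq // => i j /eqP; rewrite eqr_nat => /eqP; case.
    by move=> x /H; rewrite negbK.
  by rewrite size_map size_iota ltnn.
case/hasP => x /mapP [i _ ->] xs; exists i.+1%:R; split => //.
by rewrite pnatr_eq0.
Qed.

Lemma E_inj u v (bad : seq C) :
  (forall z, z != 0 -> z \notin bad -> E u z = E v z) -> u = v.
Proof.
move=> h; set N := maxn (Bd u) (Bd v).
have Nu : (Bd u <= N)%N by rewrite leq_maxl.
have Nv : (Bd v <= N)%N by rewrite leq_maxr.
have : Pol N u - Pol N v = 0.
  apply: (@poly_ae _ bad) => z z0 zb.
  by rewrite hornerD hornerN !Pol_horner // h // subrr.
move/eqP; rewrite subr_eq0 => /eqP PE.
apply/fsfunP => k.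
have [kN|kN] := boolP (`|k| < N)%N.
  have [i [iN ->]] : exists i : nat, (i < N + N)%N /\ k = (i%:Z - N%:Z).
    by exists `|(k + N%:Z)%R|%N; lia.
  have := congr1 (fun p : {poly C} => p`_i) PE.
  by rewrite !coef_poly iN.
rewrite !lp_dflt //; apply: contra kN => kin.
  exact: leq_trans (Bd_lt kin) Nv.
exact: leq_trans (Bd_lt kin) Nu.
Qed.

Lemma E_lp0 z : E (lp0 C) z = 0.
Proof.
rewrite (@E_sub _ _ [::]) ?big_nil // => k.
by rewrite mem_finsupp /lp0 fsfunE eqxx.
Qed.

Lemma prod_split0 (rs : seq C) z :
  \prod_(r <- rs) (z - r) =
  z ^+ count_mem 0 rs * \prod_(r <- [seq r <- rs | r != 0]) (z - r).
Proof.
elim: rs => [|r rs IH]; first by rewrite !big_nil mulr1.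
rewrite big_cons IH /=; have [->|r0] := eqVneq r 0.
  by rewrite subr0 /= exprS mulrA.
by rewrite big_cons /= add0n mulrCA.
Qed.

Lemma factor u : u <> lp0 C -> exists (lam : C) (n : int) (R : seq C),
  [/\ lam != 0, 0 \notin R &
      forall z, z != 0 -> E u z = lam * z ^ n * \prod_(r <- R) (z - r)].
Proof.
move=> u0; set N := Bd u; set P := Pol N u.
have P0 : P != 0.
  apply/eqP => P0; apply: u0; apply: (@E_inj _ _ [::]) => z z0 _.
  have := Pol_horner (leqnn N) z0; rewrite -/P P0 horner0 E_lp0 => /esym/eqP.
  by rewrite mulf_eq0 expfz_eq0 (negbTE z0) andbF /= => /eqP.
have [rs Prs] := closed_field_poly_normal P.
exists (lead_coef P), ((count_mem 0 rs)%:Z - N%:Z), [seq r <- rs | r != 0].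
split.
- by rewrite lead_coef_eq0.
- by rewrite mem_filter eqxx.
move=> z z0.
have := Pol_horner (leqnn N) z0; rewrite -/P {1}Prs hornerZ horner_prod.
rewrite (eq_bigr (fun r => z - r)); last by move=> r _; rewrite hornerXsubC.
rewrite prod_split0 => H.
have -> : E u z = z ^ (- N%:Z) * (z ^ N%:Z * E u z).
  by rewrite mulrA -expfzDr // addNr expr0z mul1r.
rewrite -H expfzDr // (_ : z ^ (count_mem 0 rs)%:Z = z ^+ count_mem 0 rs) //.
by ring.
Qed.

Lemma prod_nseq0 (a : nat) z : \prod_(r <- nseq a (0 : C)) (z - r) = z ^+ a.
Proof. by elim: a => [|a IH]; rewrite ?big_nil // big_cons IH subr0 exprS. Qed.

Lemma U (l1 l2 : C) (n1 n2 : int) (R1 R2 : seq C) :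
  l1 != 0 -> l2 != 0 -> 0 \notin R1 -> 0 \notin R2 ->
  (forall z, z != 0 ->
     l1 * z ^ n1 * \prod_(r <- R1) (z - r) = l2 * z ^ n2 * \prod_(r <- R2) (z - r)) ->
  [/\ perm_eq R1 R2, n1 = n2 & l1 = l2].
Proof.
move=> l10 l20 R10 R20 h.
set M : nat := (`|n1| + `|n2|)%N.
set a1 : nat := `|(n1 + M%:Z)%R|%N; set a2 : nat := `|(n2 + M%:Z)%R|%N.
have ea1 : n1 + M%:Z = a1%:Z by rewrite /a1 /M; lia.
have ea2 : n2 + M%:Z = a2%:Z by rewrite /a2 /M; lia.
set p1 := l1 *: \prod_(r <- nseq a1 0 ++ R1) ('X - r%:P).
set p2 := l2 *: \prod_(r <- nseq a2 0 ++ R2) ('X - r%:P).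
have hp (l : C) a (R : seq C) z : (l *: \prod_(r <- nseq a 0 ++ R) ('X - r%:P)).[z]
    = l * z ^+ a * \prod_(r <- R) (z - r).
  rewrite hornerZ horner_prod.
  rewrite (eq_bigr (fun r => z - r)); last by move=> r _; rewrite hornerXsubC.
  by rewrite big_cat /= mulrA prod_nseq0.
have p12 : p1 = p2.
  apply/eqP; rewrite -subr_eq0; apply/eqP; apply: (@poly_ae _ [::]) => z z0 _.
  rewrite hornerD hornerN !hp; apply/eqP; rewrite subr_eq0; apply/eqP.
  have e1 : z ^+ a1 = z ^ n1 * z ^ M%:Z by rewrite -expfzDr // ea1.
  have e2 : z ^+ a2 = z ^ n2 * z ^ M%:Z by rewrite -expfzDr // ea2.
  rewrite e1 e2 !mulrA; transitivity ((l1 * z ^ n1 * \prod_(r <- R1) (z - r)) * z ^ M%:Z); first by ring.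
  by rewrite h //; ring.
have ll : l1 = l2.
  have := congr1 lead_coef p12.
  by rewrite !lead_coefZ !(monicP (monic_prod_XsubC _ _ _)) !mulr1.
move: p12; rewrite /p1 /p2 ll => /(scalerI l20) /prod_XsubC_eq pe.
have aa : a1 = a2.
  have := permP pe (pred1 0); rewrite !count_cat !count_nseq /= eqxx !mul1n.
  by rewrite !(count_memPn _) // !addn0.
split => //.
- by move: pe; rewrite aa perm_cat2l.
by apply: (@addIr _ M%:Z); rewrite ea1 ea2 aa.
Qed.

Definition sinv (R : seq C) := forall x, count_mem x^-1 R = count_mem x R.
Definition tau (x : C) := (x^*)^-1.

Lemma conjV (x : C) : (x^-1)^* = (x^*)^-1.
Proof. exact: fmorphV. Qed.

Lemma tauK : involutive tau.
Proof. by move=> x; rewrite /tau conjV conjCK invrK. Qed.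

Lemma tauV x : tau x^-1 = (tau x)^-1.
Proof. by rewrite /tau conjV. Qed.

Lemma tau1 : tau 1 = 1.
Proof. by rewrite /tau rmorph1 invr1. Qed.

Lemma tau_eq0 x : (tau x == 0) = (x == 0).
Proof. by rewrite /tau invr_eq0 conjC_eq0. Qed.

Lemma eq_inv (x y : C) : (x^-1 == y) = (x == y^-1).
Proof. exact: (can2_eq invrK invrK). Qed.

Lemma eq_tau (x y : C) : (tau x == y) = (x == tau y).
Proof. exact: (can2_eq tauK tauK). Qed.

Lemma count_map_tau y (s : seq C) : count_mem y (map tau s) = count_mem (tau y) s.
Proof. by rewrite count_map; apply: eq_count => x /=; rewrite eq_tau. Qed.

Lemma count_map_inv y (s : seq C) : count_mem y (map GRing.inv s) = count_mem y^-1 s.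
Proof. by rewrite count_map; apply: eq_count => x /=; rewrite eq_inv. Qed.

Lemma sinv_perm (R : seq C) : sinv R -> perm_eq R (map GRing.inv R).
Proof. by move=> sR; apply/allP => x _; apply/eqP; rewrite /= count_map_inv sR. Qed.

Lemma perm_sinv (R : seq C) : perm_eq R (map GRing.inv R) -> sinv R.
Proof.
move=> pR x; rewrite (permP pR) count_map_inv invrK //.
Qed.

Lemma sinv_rem (R X R' : seq C) : perm_eq R (X ++ R') -> sinv R -> sinv X -> sinv R'.
Proof.
move=> pR sR sX x; have := sR x; rewrite !(permP pR) !count_cat sX.
by move/addnI.
Qed.

Lemma sinv_cat (X Y : seq C) : sinv X -> sinv Y -> sinv (X ++ Y).
Proof. by move=> sX sY x; rewrite !count_cat sX sY. Qed.

Lemma one_neqN1 : (1 : C) != -1.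
Proof.
apply/eqP => /eqP; rewrite -subr_eq0 opprK => /eqP.
by move/eqP; rewrite (_ : 1 + 1 = 2%:R :> C) // pnatr_eq0.
Qed.

Lemma inv_eq_self (x : C) : x != 0 -> (x^-1 == x) = (x == 1) || (x == -1).
Proof.
move=> x0; rewrite -sqrf_eq1; apply/eqP/eqP => [h|h].
  by rewrite expr2 -{1}h mulVf.
by apply: (mulfI x0); rewrite divff // -expr2 h.
Qed.

Lemma PL (R : seq C) : 0 \notin R -> sinv R ->
  \prod_(r <- R) (- r) = (-1) ^+ count_mem 1 R.
Proof.
move: {2}(size R) (leqnn (size R)) => n; elim: n R => [|n IH] R.
  by rewrite leqn0 => /nilP ->; rewrite big_nil.
case: R => [|r R']; first by rewrite big_nil.
rewrite /= ltnS => hs; rewrite in_cons negb_or => /andP [r0 R0] sR.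
have [r1|r1] := eqVneq r 1.
  have sR' : sinv R'.
    apply: (@sinv_rem (r :: R') [:: r]) => // x.
    by rewrite /= r1 !addn0 eq_sym eq_inv invr1 eq_sym.
  by rewrite r1 big_cons IH // /= add1n exprS.
have [rN1|rN1] := eqVneq r (-1).
  have sR' : sinv R'.
    apply: (@sinv_rem (r :: R') [:: r]) => // x.
    by rewrite /= rN1 !addn0 eq_sym eq_inv invrN1 eq_sym.
  by rewrite rN1 big_cons IH // /= opprK mul1r add0n.
have r0' : r != 0 by rewrite eq_sym.
have rir : r^-1 != r by rewrite inv_eq_self // negb_or r1 rN1.
have riR' : r^-1 \in R'.
  have := sR r; rewrite /= eqxx eq_sym (negbTE rir) add0n => h.
  by rewrite -has_pred1 has_count h.
have pR' := perm_to_rem riR'.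
set R'' := rem r^-1 R' in pR'.
have sX : sinv [:: r; r^-1].
  move=> x /=; rewrite !addn0 (inj_eq invr_inj) -eq_inv addnC //.
have sR'' : sinv R''.
  apply: (@sinv_rem (r :: R') [:: r; r^-1]) => //.
  by rewrite /= perm_cons.
have R''0 : 0 \notin R''.
  by apply: contra R0 => h; rewrite (perm_mem pR') in_cons h orbT.
have hs'' : (size R'' <= n)%N.
  by rewrite /R'' size_rem //; apply: leq_trans hs; apply: leq_pred.
rewrite big_cons (perm_big _ pR') big_cons IH // mulrA mulrNN divff //.
rewrite mul1r /= (permP pR') /=.
by rewrite invr_eq1 (negbTE r1).
Qed.

Definition special (x : C) := (tau x == x) || (tau x == x^-1).
Definition tinv (W : seq C) := forall x, count_mem (tau x) W = count_mem x W.
Definition evenc (W : seq C) := forall x, special x -> ~~ odd (count_mem x W).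

Lemma special_V x : special x^-1 = special x.
Proof.
rewrite /special tauV (inj_eq invr_inj) invrK.
by rewrite -eq_inv.
Qed.

Lemma special_tau x : special (tau x) = special x.
Proof.
rewrite /special tauK eq_sym; congr (_ || _).
by rewrite -eq_inv eq_sym.
Qed.

Lemma sub_count (X W : seq C) :
  (forall y, count_mem y X <= count_mem y W)%N -> exists W', perm_eq W (X ++ W').
Proof.
elim: X W => [|y X IH] W h; first by exists W.
have yW : y \in W.
  by rewrite -has_pred1 has_count; apply: leq_trans (h y); rewrite /= eqxx.
have [W' pW'] : exists W', perm_eq (rem y W) (X ++ W').
  apply: IH => z; rewrite count_mem_rem; have := h z; rewrite /=; lia.
exists W'; apply: perm_trans (perm_to_rem yW) _.
by rewrite /= perm_cons.
Qed.

Lemma conj_pm1 (x : C) : x != 0 -> x^-1 == x -> x^* = x.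
Proof.
move=> x0; rewrite inv_eq_self // => /orP [] /eqP ->.
  by rewrite rmorph1.
by rewrite rmorphN1.
Qed.

Lemma OI_step W x : x \in W -> 0 \notin W -> sinv W -> tinv W -> evenc W ->
  exists D0 X, [/\ 0 \notin D0, sinv D0, perm_eq X (D0 ++ map tau D0),
     (forall y, count_mem y X <= count_mem y W)%N &
     (0 < size X)%N /\ (forall y, special y -> ~~ odd (count_mem y X))].
Proof.
move=> xW W0 sW tW eW.
have x0 : x != 0 by apply: contraNneq W0 => <-.
have cx : (0 < count_mem x W)%N by rewrite -has_count has_pred1.
have [xi|xi] := eqVneq x^-1 x.
  have tx : tau x = x by rewrite /tau conj_pm1 ?xi // xi.
  have ex : ~~ odd (count_mem x W) by apply: eW; rewrite /special tx eqxx.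
  exists [:: x], [:: x; x]; split => //.
  - by rewrite inE eq_sym.
  - by move=> y /=; rewrite -eq_inv xi.
  - by rewrite /= tx.
  - move=> y /=; have [<-|] := eqVneq x y; last by [].
    by move: cx ex; case: (count_mem x W) => [|[|k]].
  - by split => // y _ /=; rewrite addn0 addnn odd_double.
have xi0 : x^-1 != 0 by rewrite invr_eq0.
have sD0 : sinv [:: x; x^-1].
  by move=> y /=; rewrite !addn0 (inj_eq invr_inj) -eq_inv addnC.
have D00 : 0 \notin [:: x; x^-1] by rewrite !inE !(eq_sym 0) negb_or x0 xi0.
have [sx|sx] := boolP (special x).
  have ex : ~~ odd (count_mem x W) by apply: eW.
  have cx2 : (1 < count_mem x W)%N.
    by move: cx ex; case: (count_mem x W) => [|[|k]].
  exists [:: x; x^-1], [:: x; x; x^-1; x^-1]; split => //.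
  - move: sx; rewrite /special => /orP [] /eqP tx.
      by rewrite /= tx tauV tx; apply/permP => p /=; lia.
    by rewrite /= tx tauV tx invrK; apply/permP => p /=; lia.
  - move=> y /=; have [<-|xy] := eqVneq x y.
      by rewrite (negbTE xi) /=; exact: cx2.
    have [<-|xiy] := eqVneq x^-1 y; last by [].
    by rewrite sW /=; exact: cx2.
  - by split => // y _ /=; lia.
have sxi : ~~ special x^-1 by rewrite special_V.
have stx : ~~ special (tau x) by rewrite special_tau.
have stxi : ~~ special (tau x^-1) by rewrite special_tau special_V.
have tx1 : tau x != x by apply: contra sx => h; rewrite /special h.
have tx2 : tau x != x^-1 by apply: contra sx => h; rewrite /special h orbT.
have uX : uniq ([:: x; x^-1] ++ map tau [:: x; x^-1]).
  have e1 : (x == x^-1) = false by rewrite eq_sym (negbTE xi).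
  have e2 : (x == tau x) = false by rewrite eq_sym (negbTE tx1).
  have e3 : (x == tau x^-1) = false by rewrite tauV -eq_inv eq_sym (negbTE tx2).
  have e4 : (x^-1 == tau x) = false by rewrite eq_sym (negbTE tx2).
  have e5 : (x^-1 == tau x^-1) = false by rewrite tauV (inj_eq invr_inj) eq_sym (negbTE tx1).
  have e6 : (tau x == tau x^-1) = false by rewrite (inj_eq (can_inj tauK)) eq_sym (negbTE xi).
  by rewrite /= !inE e1 e2 e3 e4 e5 e6.
exists [:: x; x^-1], ([:: x; x^-1] ++ map tau [:: x; x^-1]); split => //.
- move=> y; rewrite count_uniq_mem //; case yX: (y \in _) => //=.
  rewrite -has_count has_pred1.
  move: yX; rewrite !inE => /or4P [] /eqP ->.
  + exact: xW.
  + by rewrite -has_pred1 has_count sW.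
  + by rewrite -has_pred1 has_count tW.
  + by rewrite -has_pred1 has_count tW sW.
split => // y sy; rewrite count_uniq_mem //; case yX: (y \in [:: x; x^-1] ++ map tau [:: x; x^-1]) => //.
move: yX; rewrite !inE => /or4P [] /eqP yE; move: sy; rewrite yE.
- by rewrite (negbTE sx).
- by rewrite (negbTE sxi).
- by rewrite (negbTE stx).
- by rewrite (negbTE stxi).
Qed.

Lemma sinv_tinv_X (D0 X : seq C) : perm_eq X (D0 ++ map tau D0) -> sinv D0 ->
  sinv X /\ tinv X.
Proof.
move=> pX sD0; split => y; rewrite !(permP pX) !count_cat !count_map_tau.
  by rewrite tauV sD0 sD0.
by rewrite tauK addnC.
Qed.

Lemma OI (W : seq C) : 0 \notin W -> sinv W -> tinv W -> evenc W ->
  exists D, [/\ 0 \notin D, sinv D & perm_eq W (D ++ map tau D)].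
Proof.
move: {2}(size W) (leqnn (size W)) => n; elim: n W => [|n IH] W.
  by rewrite leqn0 => /nilP -> _ _ _ _; exists [::].
case: W => [|x W1] hs W0 sW tW eW; first by exists [::].
have [D0 [X [D00 sD0 pX cX [sX eX]]]] := OI_step (mem_head x W1) W0 sW tW eW.
have [W' pW] := sub_count cX.
have [sXX tXX] := sinv_tinv_X pX sD0.
have cW' y : count_mem y (x :: W1) = (count_mem y X + count_mem y W')%N.
  by rewrite (permP pW) count_cat.
have sW' : sinv W' := sinv_rem pW sW sXX.
have tW' : tinv W'.
  by move=> y; have := tW y; rewrite !cW' tXX => /addnI.
have eW' : evenc W'.
  move=> y sy; have := eW y sy; have := eX y sy; rewrite cW' oddD.
  by case: (odd (count_mem y X)); case: (odd (count_mem y W')).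
have W'0 : 0 \notin W'.
  by apply: contra W0 => h; rewrite (perm_mem pW) mem_cat h orbT.
have hs' : (size W' <= n)%N.
  have := perm_size pW; rewrite size_cat => e.
  by move: hs; rewrite e; case: (size X) sX => // k _; rewrite addSn ltnS; apply: leq_trans; apply: leq_addl.
have [D' [D'0 sD' pD']] := IH W' hs' W'0 sW' tW' eW'.
exists (D0 ++ D'); split.
- by rewrite mem_cat negb_or D00.
- exact: sinv_cat.
apply/permP => p; rewrite (permP pW) !count_cat (permP pX) (permP pD') map_cat !count_cat.
by rewrite addnACA.
Qed.

Lemma sym_E u eps c : lp_sym_type u eps c ->
  forall z, z != 0 -> E u z = eps * z ^ c * E u z^-1.
Proof.
move=> H z z0; have := congr1 (fun f => E f z) H => /= ->.
by rewrite E_mul // E_mono E_rev.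
Qed.

Lemma E_sym u eps c : (forall z, z != 0 -> E u z = eps * z ^ c * E u z^-1) ->
  lp_sym_type u eps c.
Proof.
move=> H; apply: (@E_inj _ _ [::]) => z z0 _.
by rewrite E_mul // E_mono E_rev H.
Qed.

Definition LP (n : int) (p : {poly C}) : lpoly C :=
  [fsfun k in [fset (i%:Z + n)%R | i in iota 0 (size p)]%fset => p`_`|(k - n)%R|].

Lemma E_LP n p z : z != 0 -> E (LP n p) z = z ^ n * p.[z].
Proof.
move=> z0; rewrite (@E_sub _ _ [seq (i%:Z + n)%R | i <- iota 0 (size p)]).
- rewrite big_map horner_coef mulr_sumr.
  rewrite -(big_mkord xpredT (fun i => z ^ n * (p`_i * z ^+ i))) /index_iota subn0.
  apply: eq_big_seq => i iin.
  rewrite /LP fsfunE ifT; last by apply/imfsetP; exists i.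
  rewrite addrK /=.
  by rewrite expfzDr // mulrA mulrC.
- by rewrite map_inj_uniq ?iota_uniq // => i j /addIr; case.
move=> k; rewrite mem_finsupp /LP fsfunE; case: ifP; last by rewrite eqxx.
by move=> /imfsetP [i /= iin ->] _; apply/mapP; exists i.
Qed.

Lemma prod_inv (R : seq C) z : 0 \notin R -> z != 0 ->
  \prod_(r <- R) (z^-1 - r) =
  z^-1 ^+ size R * \prod_(r <- R) (- r) * \prod_(r <- map GRing.inv R) (z - r).
Proof.
move=> R0 z0; elim: R R0 => [|r R IH]; first by rewrite !big_nil !mulr1.
rewrite in_cons negb_or => /andP [r0 R0]; rewrite /= !big_cons IH //.
have r0' : r != 0 by rewrite eq_sym.
have -> : z^-1 - r = z^-1 * (-r) * (z - r^-1) by field; apply/andP.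
by rewrite exprS; ring.
Qed.

Lemma mapinv0 (R : seq C) : 0 \notin R -> 0 \notin map GRing.inv R.
Proof.
move=> R0; apply/mapP => [[r rR /esym/eqP]]; rewrite invr_eq0 => /eqP r0.
by move: R0; rewrite -r0 rR.
Qed.

Lemma prodN_neq0 (R : seq C) : 0 \notin R -> \prod_(r <- R) (- r) != 0.
Proof.
move=> R0; rewrite prodf_seq_neq0; apply/allP => r rR /=.
by rewrite oppr_eq0; apply: contraNneq R0 => <-.
Qed.

Lemma sym_factor u eps c l n (R : seq C) :
  (eps = 1 \/ eps = -1) -> lp_sym_type u eps c -> l != 0 -> 0 \notin R ->
  (forall z, z != 0 -> E u z = l * z ^ n * \prod_(r <- R) (z - r)) ->
  [/\ sinv R, c = (2 * n + (size R)%:Z)%R & eps * \prod_(r <- R) (- r) = 1].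
Proof.
move=> heps hs l0 R0 hf.
have eps0 : eps != 0.
  by case: heps => ->; rewrite ?oppr_eq0 oner_eq0.
have [pR nn ll] : [/\ perm_eq R (map GRing.inv R), n = (c - n - (size R)%:Z)%R
    & l = eps * l * \prod_(r <- R) (- r)].
  apply: U => //.
  - by rewrite !mulf_neq0 // prodN_neq0.
  - exact: mapinv0.
  move=> z z0; rewrite -hf // (sym_E hs) // hf ?invr_neq0 // prod_inv //.
  rewrite exprz_inv.
  have -> : z^-1 ^+ size R = z ^ (- (size R)%:Z) by rewrite -exprz_inv.
  rewrite !expfzDr // ?oppr_eq0 //; ring.
split.
- exact: perm_sinv.
- move: nn; lia.
apply: (mulIf l0); rewrite mul1r [RHS]ll; ring.
Qed.

Lemma sign_sq k : (-1) ^+ k * (-1) ^+ k = 1 :> C.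
Proof. by rewrite -exprMn mulrNN mulr1 expr1n. Qed.

Lemma factor_sym u l n (R : seq C) :
  l != 0 -> 0 \notin R -> sinv R ->
  (forall z, z != 0 -> E u z = l * z ^ n * \prod_(r <- R) (z - r)) ->
  lp_sym_type u ((-1) ^+ count_mem 1 R) (2 * n + (size R)%:Z)%R.
Proof.
move=> l0 R0 sR hf; apply: E_sym => z z0.
have eP : \prod_(r <- map GRing.inv R) (z - r) = \prod_(r <- R) (z - r).
  by apply/esym/perm_big/sinv_perm.
rewrite hf // hf ?invr_neq0 // prod_inv // PL // exprz_inv eP.
have -> : z^-1 ^+ size R = z ^ (- (size R)%:Z) by rewrite -exprz_inv.
have e2 : z ^ (2 * n + (size R)%:Z) * z ^ (- n) * z ^ (- (size R)%:Z) = z ^ n.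
  by rewrite -!expfzDr // ?oppr_eq0 //; congr (_ ^ _); lia.
have ss := sign_sq (count_mem 1 R).
transitivity (l * (z ^ (2 * n + (size R)%:Z) * z ^ (- n) * z ^ (- (size R)%:Z)) *
  \prod_(r <- R) (z - r) * ((-1) ^+ count_mem 1 R * (-1) ^+ count_mem 1 R)).
  by rewrite ss e2 mulr1.
ring.
Qed.

Lemma sign_pm (k : nat) : (-1) ^+ k = 1 :> C \/ (-1) ^+ k = -1 :> C.
Proof. by rewrite -signr_odd; case: (odd k); [right; rewrite expr1 | left; rewrite expr0]. Qed.

Lemma E_star_f u l n (R : seq C) :
  (forall z, z != 0 -> E u z = l * z ^ n * \prod_(r <- R) (z - r)) ->
  forall z, z != 0 -> E (lpstar u) z = l^* * z ^ (- n) * \prod_(r <- R) (z^-1 - r^*).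
Proof.
move=> hf z z0; rewrite E_star hf ?invr_eq0 ?conjC_eq0 //.
rewrite !rmorphM /= rmorph_prod fmorphXz fmorphV /= conjCK exprz_inv.
by congr (_ * _); apply: eq_bigr => r _; rewrite rmorphB /= fmorphV /= conjCK.
Qed.

Lemma prod_star (R : seq C) z : 0 \notin R -> z != 0 ->
  \prod_(r <- R) ((z - r) * (z^-1 - r^*)) =
  \prod_(r <- R) (- r^*) * z ^ (- (size R)%:Z) * \prod_(r <- R ++ map tau R) (z - r).
Proof.
move=> R0 z0; rewrite -exprz_inv.
elim: R R0 => [|r R IH]; first by rewrite !big_nil !mulr1.
rewrite in_cons negb_or => /andP [r0 R0]; rewrite /= !big_cons IH //.
have r0' : r^* != 0 by rewrite conjC_eq0 eq_sym.
rewrite !big_cat /= !big_cons.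
have -> : (z - r) * (z^-1 - r^*) = - r^* * z^-1 * ((z - r) * (z - tau r)).
  by rewrite /tau; field; rewrite z0 r0'.
rewrite (_ : z^-1 ^ (size R).+1 = z^-1 * z^-1 ^ size R); last exact: exprS.
ring.
Qed.

Definition pi (R : seq C) := \prod_(r <- R) (- r^*).

Lemma normsq u l n (R : seq C) : 0 \notin R ->
  (forall z, z != 0 -> E u z = l * z ^ n * \prod_(r <- R) (z - r)) ->
  forall z, z != 0 -> E (lpmul u (lpstar u)) z =
    l * l^* * pi R * z ^ (- (size R)%:Z) * \prod_(r <- R ++ map tau R) (z - r).
Proof.
move=> R0 hf z z0; rewrite E_mul // hf // (E_star_f hf) //.
have e : z ^ n * z ^ (- n) = 1 by rewrite -expfzDr // subrr.
transitivity (l * l^* * (z ^ n * z ^ (- n)) * \prod_(r <- R) ((z - r) * (z^-1 - r^*))).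
  by rewrite big_split /=; ring.
by rewrite e mulr1 prod_star // /pi; ring.
Qed.

Lemma piE (R : seq C) : 0 \notin R -> sinv R -> pi R = (-1) ^+ count_mem 1 R.
Proof.
move=> R0 sR; rewrite /pi; transitivity ((\prod_(r <- R) (- r))^*).
  by rewrite rmorph_prod; apply: eq_bigr => r _; rewrite rmorphN.
by rewrite PL // rmorphXn rmorphN1.
Qed.

Lemma pi_neq0 (R : seq C) : 0 \notin R -> pi R != 0.
Proof.
move=> R0; rewrite prodf_seq_neq0; apply/allP => r rR /=.
by rewrite oppr_eq0 conjC_eq0; apply: contraNneq R0 => <-.
Qed.

Lemma tau0 (R : seq C) : 0 \notin R -> 0 \notin R ++ map tau R.
Proof.
move=> R0; rewrite mem_cat negb_or R0 /=; apply/mapP => [[r rR /esym/eqP]].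
by rewrite tau_eq0 => /eqP r0; move: R0; rewrite -r0 rR.
Qed.

Lemma count2 (X : seq C) y : count_mem y (X ++ map tau X) = (count_mem y X + count_mem (tau y) X)%N.
Proof. by rewrite count_cat count_map_tau. Qed.

Lemma count2_1 (X : seq C) : count_mem (1%R : C) (X ++ map tau X) = (count_mem (1%R : C) X + count_mem (1%R : C) X)%N.
Proof. by rewrite count2 tau1. Qed.

Lemma even2 (X : seq C) : sinv X -> evenc (X ++ map tau X).
Proof.
move=> sX y /orP [] /eqP ty; rewrite count2 ty ?sX addnn odd_double //.
Qed.

Lemma ne0_of (X : seq C) z : z \notin X -> \prod_(r <- X) (z - r) != 0.
Proof.
move=> zX; rewrite prodf_seq_neq0; apply/allP => r rX /=; rewrite subr_eq0.
by apply: contraNneq zX => ->.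
Qed.

Lemma eps_sign eps (R : seq C) : 0 \notin R -> sinv R ->
  eps * \prod_(r <- R) (- r) = 1 -> eps = (-1) ^+ count_mem 1 R.
Proof.
move=> R0 sR h; have e := sign_sq (count_mem 1 R); rewrite -PL // in e *.
transitivity (eps * (\prod_(r <- R) (- r) * \prod_(r <- R) (- r))); first by rewrite e mulr1.
by rewrite mulrA h mul1r.
Qed.
End S.
Arguments tau {C} x.

Unset Implicit Arguments.

Theorem lemma3p17 (C : numClosedFieldType) (u v w : lpoly C) :
  u <> lp0 C -> v <> lp0 C ->
  lp_has_sym u -> lp_has_sym v ->
  lpmul u (lpstar u) = lpmul (lpmul v (lpstar v)) w ->
  (exists d : lpoly C, lp_has_sym d /\ lpmul d (lpstar d) = w) /\
  (forall d : lpoly C, lp_has_sym d -> lpmul d (lpstar d) = w ->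
     exists k : int,
       lpmul (lpmul d (lprev u)) v
       = lpmul (lpmono 1 (2 * k)) (lpmul (lpmul (lprev d) u) (lprev v))).
Proof.
move=> u0 v0 [eu [cu [heu su]]] [ev [cv [hev sv]]] H.
have [lu [nu [A [lu0 A0 fu]]]] := factor u0.
have [lv [nv [B [lv0 B0 fv]]]] := factor v0.
have [sA cuE euE] := sym_factor heu su lu0 A0 fu.
have [sB cvE evE] := sym_factor hev sv lv0 B0 fv.
have Ku0 : lu * lu^* * pi A != 0 by rewrite !mulf_neq0 ?conjC_eq0 ?pi_neq0.
have Kv0 : lv * lv^* * pi B != 0 by rewrite !mulf_neq0 ?conjC_eq0 ?pi_neq0.
have HE z : z != 0 ->
   lu * lu^* * pi A * z ^ (- (size A)%:Z) * \prod_(r <- A ++ map tau A) (z - r) =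
   lv * lv^* * pi B * z ^ (- (size B)%:Z) * \prod_(r <- B ++ map tau B) (z - r) * E w z.
  move=> z0; have := congr1 (fun f => E f z) H.
  by rewrite /= (@E_mul _ _ w) // (normsq A0 fu) // (normsq B0 fv).
have w0 : w <> lp0 C.
  move=> w0; have [z [z0 zA]] := fresh (A ++ map tau A).
  have := HE z z0; rewrite w0 E_lp0 mulr0; apply/eqP.
  by rewrite !mulf_neq0 ?conjC_eq0 ?pi_neq0 ?expfz_neq0 ?ne0_of.
have [sA2 tA2] := sinv_tinv_X (perm_refl (A ++ map tau A)) sA.
have [sB2 tB2] := sinv_tinv_X (perm_refl (B ++ map tau B)) sB.
have A20 := tau0 A0; have B20 := tau0 B0.
split.
  have [lw [nw [W [lw0 W0 fw]]]] := factor w0.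
  have [pW eS eK] : [/\ perm_eq (A ++ map tau A) ((B ++ map tau B) ++ W),
      - (size A)%:Z = (- (size B)%:Z + nw)%R & lu * lu^* * pi A = lv * lv^* * pi B * lw].
    apply: U => //.
    - by rewrite mulf_neq0.
    - by rewrite mem_cat negb_or B20.
    move=> z z0; rewrite HE // fw // !big_cat /= expfzDr //; ring.
  have cW y : count_mem y (A ++ map tau A) =
      (count_mem y (B ++ map tau B) + count_mem y W)%N.
    by rewrite (permP pW) count_cat.
  have sW : sinv W := sinv_rem pW sA2 sB2.
  have tW : tinv W by move=> y; have := tA2 y; rewrite !cW tB2 => /addnI.
  have eW : evenc W.
    move=> y sy; have := even2 sA sy; have := even2 sB sy; rewrite cW oddD.
    by case: (odd (count_mem y (B ++ map tau B))); case: (odd (count_mem y W)).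
  have [D [D0 sD pD]] := OI W0 sW tW eW.
  have c1 : count_mem (1%R : C) A = (count_mem (1%R : C) B + count_mem (1%R : C) D)%N.
    have := cW 1%R; rewrite !count2_1 (permP pD) count2_1.
    by rewrite addnACA !addnn => /double_inj.
  have szA : size A = (size B + size D)%N.
    have := perm_size pW; rewrite !size_cat !size_map (perm_size pD) size_cat size_map.
    by rewrite addnACA !addnn => /double_inj.
  have piA : pi A = pi B * pi D by rewrite !piE // c1 exprD.
  set ld : C := `|lu| / `|lv|.
  have ld0 : ld != 0 by rewrite mulf_neq0 ?invr_eq0 ?normr_eq0.
  have ldK : ld * ld^* = lu * lu^* / (lv * lv^*).
    rewrite geC0_conj ?divr_ge0 ?normr_ge0 // -expr2 expr_div_n !normCK //.
  set d := LP 0 (ld *: \prod_(r <- D) ('X - r%:P)).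
  have fd z : z != 0 -> E d z = ld * z ^ 0 * \prod_(r <- D) (z - r).
    move=> z0; rewrite E_LP // hornerZ horner_prod expr0z !mul1r mulr1.
    by congr (_ * _); apply: eq_bigr => r _; rewrite hornerXsubC.
  exists d; split.
    exists ((-1) ^+ count_mem 1 D), (2 * 0 + (size D)%:Z)%R; split.
      exact: sign_pm.
    exact: factor_sym ld0 D0 sD fd.
  apply: (@E_inj _ _ _ [::]) => z z0 _; rewrite (normsq D0 fd) // fw //.
  rewrite (perm_big _ pD).
  have -> : nw = - (size D)%:Z by move: eS; rewrite szA; clear; lia.
  congr (_ * _ * _).
  apply: (mulfI Kv0); rewrite -eK ldK piA.
  by field; rewrite /= conjC_eq0 lv0.
move=> d [ed [cd [hed sd]]] Hd.
have d0 : d <> lp0 C.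
  move=> d0; apply: w0; rewrite -Hd d0; apply: (@E_inj _ _ _ [::]) => z z0 _.
  by rewrite E_mul // !E_lp0 mul0r.
have [ld [nd [D [ld0 D0 fd]]]] := factor d0.
have [sD cdE edE] := sym_factor hed sd ld0 D0 fd.
have [pW eS _] : [/\ perm_eq (A ++ map tau A) ((B ++ map tau B) ++ (D ++ map tau D)),
    - (size A)%:Z = (- (size B)%:Z + - (size D)%:Z)%R &
    lu * lu^* * pi A = lv * lv^* * pi B * (ld * ld^* * pi D)].
  apply: U => //.
  - by rewrite !mulf_neq0 ?conjC_eq0 ?pi_neq0.
  - by rewrite mem_cat negb_or B20 tau0.
  move=> z z0; rewrite HE // -Hd (normsq D0 fd) // !big_cat /= expfzDr //; ring.
have c1 : count_mem (1%R : C) A = (count_mem (1%R : C) B + count_mem (1%R : C) D)%N.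
  have := permP pW (pred1 (1%R : C)); rewrite !count_cat !count_map_tau tau1.
  by rewrite addnACA !addnn => /double_inj.
have szA : size A = (size B + size D)%N.
  have := perm_size pW; rewrite !size_cat !size_map.
  by rewrite addnACA !addnn => /double_inj.
have euS := eps_sign A0 sA euE.
have evS := eps_sign B0 sB evE.
have edS := eps_sign D0 sD edE.
exists (nd + nv - nu)%R.
apply: (@E_inj _ _ _ [::]) => z z0 _.
rewrite !E_mul // !E_rev E_mono (sym_E sd z0) (sym_E sv z0) (sym_E su z0).
have ez : z ^ cd * z ^ cv = z ^ (2 * (nd + nv - nu)) * z ^ cu.
  rewrite -!expfzDr //; congr (_ ^ _); rewrite cdE cvE cuE szA; clear; lia.
have ee : eu = ed * ev by rewrite euS edS evS c1 exprD mulrC.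
rewrite ee.
transitivity (ed * ev * (z ^ cd * z ^ cv) * (E d z^-1 * E u z^-1 * E v z^-1)); first by ring.
rewrite ez; ring.
Qed.
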